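(* Let $Q$ be a loop and let $X$ be a normal subloop of $Q$ which is a commutative group and satisfies $X\le\mathrm{Nuc}_m(Q)\cap\mathrm{Nuc}_r(Q)$. Then $X$ induces an abelian congruence of $Q$.
   Context: A loop is a magma with identity in which all left and right translations are bijections. A subloop is normal if it is the kernel of a homomorphism. $\mathrm{Nuc}_m(Q)=\{x: y(xz)=(yx)z\ \forall y,z\}$, $\mathrm{Nuc}_r(Q)=\{x: y(zx)=(yz)x\ \forall y,z\}$. For a normal subloop $X$ of $Q$, $X$ induces an abelian congruence of $Q$ if the congruence with classes $aX$ has trivial Freese–McKenzie commutator with itself; equivalently, $Q$ is isomorphic to an abelian extension of $X$ by $Q/X$: a loop on $Q/X\times X$ with $(r,x)(s,y)=(rs,\varphi_{r,s}(x)+\psi_{r,s}(y)+\theta_{r,s})$, $\varphi_{r,s},\psi_{r,s}\in\mathrm{Aut}(X)$, $\theta_{r,s}\in X$, $\varphi_{r,1}=\mathrm{id}=\psi_{1,r}$, $\theta_{1,r}=0=\theta_{r,1}$. *)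

(* Defs.v *)
Set Implicit Arguments.

(* A loop, given equationally with its two divisions (universal-algebra
   signature (., \, /, 1)).  These axioms are equivalent to: magma with
   identity in which all left and right translations are bijections
   (ldiv x = inverse of L_x, rdiv _ x = inverse of R_x). *)
Record loop := Loop {
  carrier :> Type;
  lmul : carrier -> carrier -> carrier;
  lone : carrier;
  lldiv : carrier -> carrier -> carrier;   (* x \ y *)
  lrdiv : carrier -> carrier -> carrier;   (* y / x *)
  lone_l : forall x, lmul lone x = x;
  lone_r : forall x, lmul x lone = x;
  lldivK : forall x y, lldiv x (lmul x y) = y;
  lmulKl : forall x y, lmul x (lldiv x y) = y;
  lrdivK : forall x y, lrdiv (lmul y x) x = y;
  lmulKr : forall x y, lmul (lrdiv y x) x = y
}.

Arguments lmul {l}. Arguments lone {l}. Arguments lldiv {l}. Arguments lrdiv {l}.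

Definition loop_hom {Q L : loop} (f : Q -> L) : Prop :=
  forall x y : Q, f (lmul x y) = lmul (f x) (f y).

(* A subloop X (as a predicate) is normal: it is the kernel of a homomorphism. *)
Definition normal_subloop {Q : loop} (X : Q -> Prop) : Prop :=
  exists (L : loop) (f : Q -> L), loop_hom f /\ (forall x, X x <-> f x = lone).

Definition commutative_group_on {Q : loop} (X : Q -> Prop) : Prop :=
  (forall x y z, X x -> X y -> X z -> lmul (lmul x y) z = lmul x (lmul y z)) /\
  (forall x y, X x -> X y -> lmul x y = lmul y x).

Definition Nuc_m {Q : loop} (x : Q) : Prop :=
  forall y z : Q, lmul y (lmul x z) = lmul (lmul y x) z.
Definition Nuc_r {Q : loop} (x : Q) : Prop :=
  forall y z : Q, lmul y (lmul z x) = lmul (lmul y z) x.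

(* The congruence whose classes are the cosets aX:  y ~ x iff y in xX. *)
Definition coset_rel {Q : loop} (X : Q -> Prop) (x y : Q) : Prop :=
  exists u, X u /\ y = lmul x u.

Inductive term : Type :=
  | tVar : nat -> term
  | tOne : term
  | tMul : term -> term -> term
  | tLDiv : term -> term -> term
  | tRDiv : term -> term -> term.

Fixpoint teval {Q : loop} (v : nat -> Q) (t : term) : Q :=
  match t with
  | tVar n => v n
  | tOne => lone
  | tMul s u => lmul (teval v s) (teval v u)
  | tLDiv s u => lldiv (teval v s) (teval v u)
  | tRDiv s u => lrdiv (teval v s) (teval v u)
  end.

Definition env {Q : loop} (a : Q) (c : nat -> Q) : nat -> Q :=
  fun n => match n with O => a | S i => c i end.

(* Term condition C(alpha, alpha; 0), i.e. [alpha, alpha] = 0 for the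
   Freese--McKenzie commutator (the least delta with C(alpha,alpha;delta)). *)
Definition abelian_congruence {Q : loop} (alpha : Q -> Q -> Prop) : Prop :=
  forall (t : term) (a b : Q) (c d : nat -> Q),
    alpha a b -> (forall i, alpha (c i) (d i)) ->
    teval (env a c) t = teval (env a d) t ->
    teval (env b c) t = teval (env b d) t.

Definition induces_abelian_congruence {Q : loop} (X : Q -> Prop) : Prop :=
  abelian_congruence (coset_rel X).

(* Main.v *)
Require Import Defs.

Lemma lcancel (L : loop) (a b c : L) : lmul a b = lmul a c -> b = c.
Proof. intro H. rewrite <- (lldivK L a b), H. apply lldivK. Qed.

Lemma rcancel (L : loop) (a b c : L) : lmul b a = lmul c a -> b = c.
Proof. intro H. rewrite <- (lrdivK L a b), H. apply lrdivK. Qed.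

Lemma teval_ext (Q : loop) (v w : nat -> Q) t :
  (forall i, v i = w i) -> teval v t = teval w t.
Proof.
  intro H; induction t; simpl; try rewrite IHt1, IHt2; auto.
Qed.

Section Main.
Variable Q : loop.
Variable X : Q -> Prop.
Notation "a * b" := (lmul a b).
Notation "a \ b" := (lldiv a b) (at level 40, left associativity).
Notation "a / b" := (lrdiv a b).
Hypothesis Xone : X lone.
Hypothesis Xmul : forall a b, X a -> X b -> X (a * b).
Hypothesis Xld : forall a b, X a -> X b -> X (a \ b).
Hypothesis Xrd : forall a b, X a -> X b -> X (a / b).
Hypothesis Xconj : forall p y, X p -> X (y \ (p * y)).
Hypothesis Xconj' : forall r y, X r -> X ((y * r) / y).
Hypothesis Xassoc : forall x y z, X x -> X y -> X z -> (x * y) * z = x * (y * z).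
Hypothesis Xcomm : forall x y, X x -> X y -> x * y = y * x.
Hypothesis Nm : forall x, X x -> Nuc_m x.
Hypothesis Nr : forall x, X x -> Nuc_r x.

Lemma swap4 a b c d : X a -> X b -> X c -> X d -> (a * b) * (c * d) = (a * c) * (b * d).
Proof.
  intros. rewrite Xassoc, <- (Xassoc b c d), (Xcomm b c), (Xassoc c b d), <- (Xassoc a c);
  auto.
Qed.

Definition J (y p : Q) := y \ (p * y).
Definition J' (y r : Q) := (y * r) / y.

Lemma JP y p : p * y = y * J y p.
Proof. unfold J. rewrite lmulKl. reflexivity. Qed.

Lemma Jhom y p p' : X p -> X p' -> J y (p * p') = J y p * J y p'.
Proof.
  intros. unfold J at 1. apply (lcancel Q y). rewrite lmulKl.
  rewrite (Nr _ (Xconj p' y H0)).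
  rewrite <- (JP y p). rewrite <- (Nr _ (Xconj p' y H0)). rewrite lmulKl.
  symmetry; apply (Nm _ H0 p y).
Qed.

Lemma JJ' y r : J y (J' y r) = r.
Proof. unfold J, J'. rewrite lmulKr. apply lldivK. Qed.

Lemma Jinj y a b : J y a = J y b -> a = b.
Proof. intro H. apply (rcancel Q y). rewrite (JP y a), (JP y b), H. reflexivity. Qed.

Lemma J'hom y r r' : X r -> X r' -> J' y (r * r') = J' y r * J' y r'.
Proof.
  intros. apply (Jinj y). rewrite Jhom by (apply Xconj'; auto). rewrite !JJ'. reflexivity.
Qed.

Lemma ldhom a a' b b' : X a -> X a' -> X b -> X b' -> (a * a') \ (b * b') = (a \ b) * (a' \ b').
Proof.
  intros. apply (lcancel Q (a * a')). rewrite lmulKl. rewrite swap4; auto.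
  rewrite !lmulKl. reflexivity.
Qed.

Lemma rdhom a a' b b' : X a -> X a' -> X b -> X b' -> (a * a') / (b * b') = (a / b) * (a' / b').
Proof.
  intros. apply (rcancel Q (b * b')). rewrite lmulKr. rewrite swap4; auto.
  rewrite !lmulKr. reflexivity.
Qed.

Definition allX (u : nat -> Q) := forall i, X (u i).

Lemma main t (w : nat -> Q) : exists H : (nat -> Q) -> Q,
  (forall u, allX u -> X (H u)) /\
  (forall u, allX u -> teval (fun i => w i * u i) t = teval w t * H u) /\
  (forall u v, allX u -> allX v -> H (fun i => u i * v i) = H u * H v).
Proof.
  induction t as [n| |s [H1 [A1 [B1 C1]]] t [H2 [A2 [B2 C2]]]
    |s [H1 [A1 [B1 C1]]] t [H2 [A2 [B2 C2]]]|s [H1 [A1 [B1 C1]]] t [H2 [A2 [B2 C2]]]].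
  - exists (fun u => u n). simpl. repeat split; auto.
  - exists (fun _ => lone). simpl. repeat split; intros; rewrite ?lone_r; auto.
  - exists (fun u => J (teval w t) (H1 u) * H2 u). simpl.
    set (x := teval w s). set (y := teval w t). repeat split.
    + intros u Hu. apply Xmul; auto. apply Xconj; auto.
    + intros u Hu. rewrite B1, B2 by auto. fold x y.
      pose proof (A1 u Hu) as Xp. pose proof (A2 u Hu) as Xq.
      assert (XJ : X (J y (H1 u))) by (apply Xconj; auto).
      rewrite (Nr _ Xq (x * H1 u) y). rewrite <- (Nm _ Xp x y). rewrite (JP y (H1 u)).
      rewrite (Nr _ XJ x y). rewrite <- (Nr _ Xq (x * y)). reflexivity.
    + intros u v Hu Hv. rewrite C1, C2, Jhom by auto.
      apply swap4; auto; apply Xconj; auto.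
  - exists (fun u => (J (teval w s \ teval w t) (H1 u)) \ H2 u). simpl.
    set (x := teval w s). set (y := teval w t). set (z := x \ y). repeat split.
    + intros u Hu. apply Xld; auto. apply Xconj; auto.
    + intros u Hu. rewrite B1, B2 by auto. fold x y.
      pose proof (A1 u Hu) as Xp. pose proof (A2 u Hu) as Xq.
      assert (XJ : X (J z (H1 u))) by (apply Xconj; auto).
      pose proof (Xld _ _ XJ Xq) as XK.
      set (K := J z (H1 u) \ H2 u) in *.
      assert (E : (x * H1 u) * (z * K) = y * H2 u).
      { rewrite (Nr _ XK (x * H1 u) z). rewrite <- (Nm _ Xp x z). rewrite (JP z (H1 u)).
        rewrite (Nr _ XJ x z). rewrite <- (Nr _ XK (x * z)). unfold K, z. rewrite !lmulKl.
        reflexivity. }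
      rewrite <- E. apply lldivK.
    + intros u v Hu Hv. rewrite C1, C2, Jhom by auto.
      apply ldhom; auto; apply Xconj; auto.
  - exists (fun u => J' (teval w t) (H1 u / H2 u)). simpl.
    set (x := teval w s). set (y := teval w t). set (z := x / y). repeat split.
    + intros u Hu. apply Xconj'; auto.
    + intros u Hu. rewrite B1, B2 by auto. fold x y.
      pose proof (A1 u Hu) as Xp. pose proof (A2 u Hu) as Xq.
      pose proof (Xconj' (H1 u / H2 u) y (Xrd _ _ Xp Xq)) as XK.
      set (K := J' y (H1 u / H2 u)) in *.
      assert (XJ : X (J y K)) by (apply Xconj; auto).
      assert (E : (z * K) * (y * H2 u) = x * H1 u).
      { rewrite (Nr _ Xq (z * K) y). rewrite <- (Nm K XK z y). rewrite (JP y K).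
        rewrite (Nr (J y K) XJ z y). unfold z. rewrite lmulKr. rewrite <- (Nr _ Xq x (J y K)).
        unfold K. rewrite JJ', lmulKr. reflexivity. }
      rewrite <- E. apply lrdivK.
    + intros u v Hu Hv. rewrite C1, C2, rdhom, J'hom by auto. reflexivity.
Qed.

End Main.

Theorem lemma2p9 (Q : loop) (X : Q -> Prop) :
  normal_subloop X ->
  commutative_group_on X ->
  (forall x, X x -> Nuc_m x /\ Nuc_r x) ->
  induces_abelian_congruence X.
Proof.
  intros [L [f [Hf Hk]]] [Has Hco] Hn.
  assert (f1 : f lone = lone).
  { apply (lcancel L (f lone)). rewrite <- Hf, !lone_r. reflexivity. }
  assert (Xone : X lone) by (apply Hk; auto).
  assert (Xmul : forall a b, X a -> X b -> X (lmul a b)).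
  { intros a b Ha Hb. apply Hk. rewrite Hf, (proj1 (Hk a) Ha), (proj1 (Hk b) Hb).
    apply lone_l. }
  assert (Xld : forall a b, X a -> X b -> X (lldiv a b)).
  { intros a b Ha Hb. apply Hk. apply (lcancel L (f a)). rewrite <- Hf, lmulKl.
    rewrite (proj1 (Hk a) Ha), (proj1 (Hk b) Hb), lone_l. reflexivity. }
  assert (Xrd : forall a b, X a -> X b -> X (lrdiv a b)).
  { intros a b Ha Hb. apply Hk. apply (rcancel L (f b)). rewrite <- Hf, lmulKr.
    rewrite (proj1 (Hk a) Ha), (proj1 (Hk b) Hb), lone_l. reflexivity. }
  assert (Xconj : forall p y, X p -> X (lldiv y (lmul p y))).
  { intros p y Hp. apply Hk. apply (lcancel L (f y)). rewrite <- Hf, lmulKl.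
    rewrite Hf, (proj1 (Hk p) Hp), lone_l, lone_r. reflexivity. }
  assert (Xconj' : forall r y, X r -> X (lrdiv (lmul y r) y)).
  { intros r y Hr. apply Hk. apply (rcancel L (f y)). rewrite <- Hf, lmulKr.
    rewrite Hf, (proj1 (Hk r) Hr), lone_l, lone_r. reflexivity. }
  assert (Nm : forall x, X x -> Nuc_m x) by (intros; apply Hn; auto).
  assert (Nr : forall x, X x -> Nuc_r x) by (intros; apply Hn; auto).
  intros t a b c d [u0 [Hu0 Hb]] Hcd Heq.
  set (v := fun i => lldiv (c i) (d i)).
  assert (Xv : forall i, X (v i)).
  { intro i. unfold v. destruct (Hcd i) as [vi [H1 H2]]. rewrite H2, lldivK. auto. }
  assert (Dv : forall i, d i = lmul (c i) (v i)).
  { intro i. unfold v. rewrite lmulKl. reflexivity. }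
  clearbody v.
  set (w := env a c).
  destruct (main Q X Xone Xmul Xld Xrd Xconj Xconj' Has Hco Nm Nr t w) as [H [A [B C]]].
  set (U := env u0 (fun _ => lone)).
  set (V := env lone v).
  assert (XU : allX Q X U) by (intros [|i]; simpl; auto).
  assert (XV : allX Q X V) by (intros [|i]; simpl; auto).
  assert (EV : teval (env a d) t = lmul (teval w t) (H V)) by
    (rewrite <- B by auto; apply teval_ext; intros [|i]; simpl; rewrite ?lone_r; auto).
  assert (HV1 : H V = lone).
  { apply (lcancel Q (teval w t)). rewrite lone_r, <- EV. symmetry. exact Heq. }
  assert (EU : teval (env b c) t = lmul (teval w t) (H U)) by
    (rewrite <- B by auto; apply teval_ext; intros [|i]; simpl; rewrite ?lone_r; auto).
  assert (EUV : teval (env b d) t = lmul (teval w t) (H (fun i => lmul (U i) (V i)))).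
  { rewrite <- B by (intro i; apply Xmul; auto). apply teval_ext.
    intros [|i]; simpl; rewrite ?lone_r, ?lone_l; auto. }
  rewrite EUV, EU, C, HV1, lone_r by auto. reflexivity.
Qed.
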